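(* Let $\kappa>0$ and $\tau=\inf\{m\ge0:r_m^2\le\kappa\}$. Then for every $m\ge0$, \[\|\widehat F^{(\tau)}-\widehat F^{(m)}\|_n^2\le\|\widehat F^{(m)}-f^*\|_n^2+2|c_m|+(\kappa-\|\varepsilon\|_n^2)\mathbf 1\{\tau<m\}+(\|\varepsilon\|_n^2+\Delta(r_\tau^2)-\kappa)\mathbf 1\{\tau>m\},\] where $\Delta(r_m^2)=r_{m-1}^2-r_m^2$.
   Context: Let $Y=f^*+\varepsilon\in\mathbb R^n$ with $f^*,\varepsilon\in\mathbb R^n$, and let $\mathbf X\in\mathbb R^{n\times p}$ have rank $n$ with columns $X^{(j)}$. $\langle a,b\rangle_n=n^{-1}\sum_ia_ib_i$, $\|\cdot\|_n$ its norm, $\|\varepsilon\|_n^2=n^{-1}\sum_i\varepsilon_i^2$. $\widehat\Pi_J$: $\langle\cdot,\cdot\rangle_n$-orthogonal projection onto $\mathrm{span}\{X^{(j)}:j\in J\}$. OMP: $\widehat F^{(0)}=0,\widehat J_0=\emptyset$, $\widehat j_{m+1}\in\arg\max_j|\langle Y-\widehat F^{(m)},X^{(j)}/\|X^{(j)}\|_n\rangle_n|$, $\widehat J_{m+1}=\widehat J_m\cup\{\widehat j_{m+1}\}$, $\widehat F^{(m+1)}=\widehat\Pi_{\widehat J_{m+1}}Y$; $\widehat\Pi_m=\widehat\Pi_{\widehat J_m}$; $r_m^2=\|Y-\widehat F^{(m)}\|_n^2$; cross term $c_m=\langle(I-\widehat\Pi_m)f^*,\varepsilon\rangle_n$. 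*)

(* Defs.v *)
From HB Require Import structures.
From mathcomp Require Import all_boot all_order all_algebra.
Set Implicit Arguments. Unset Strict Implicit. Unset Printing Implicit Defensive.
Import Order.TTheory GRing.Theory Num.Theory.
Local Open Scope ring_scope.

Definition ipn (R : realFieldType) (n : nat) (a b : 'cV[R]_n) : R :=
  n%:R^-1 * \sum_(i < n) a i 0 * b i 0.

Definition sqn (R : realFieldType) (n : nat) (a : 'cV[R]_n) : R := ipn a a.

Definition nrmn (R : rcfType) (n : nat) (a : 'cV[R]_n) : R := Num.sqrt (sqn a).

Definition in_span (R : realFieldType) (n p : nat) (X : 'M[R]_(n, p))
  (J : {set 'I_p}) (w : 'cV[R]_n) : Prop :=
  exists c : 'I_p -> R, w = \sum_(j in J) c j *: col j X.

(* w = \hat\Pi_J v : the <.,.>_n-orthogonal projection of v onto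
   span{ X^(j) : j in J } (characterised by membership + orthogonality) *)
Definition is_proj (R : realFieldType) (n p : nat) (X : 'M[R]_(n, p))
  (J : {set 'I_p}) (v w : 'cV[R]_n) : Prop :=
  in_span X J w /\ forall j, j \in J -> ipn (v - w) (col j X) = 0.

Definition Jsel (p : nat) (jsel : nat -> 'I_p) (m : nat) : {set 'I_p} :=
  [set jsel (nat_of_ord k) | k : 'I_m].

(* OMP path: jsel m is the index \hat j_{m+1} selected at step m+1, and
   F m = \hat F^{(m)} = \hat\Pi_{\hat J_m} Y. *)
Definition omp_path (R : rcfType) (n p : nat) (X : 'M[R]_(n, p))
  (Y : 'cV[R]_n) (jsel : nat -> 'I_p) (F : nat -> 'cV[R]_n) : Prop :=
  (forall m, is_proj X (Jsel jsel m) Y (F m)) /\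
  (forall m (j : 'I_p),
     `| ipn (Y - F m) ((nrmn (col j X))^-1 *: col j X) |
       <= `| ipn (Y - F m) ((nrmn (col (jsel m) X))^-1 *: col (jsel m) X) |).

(* Main.v *)
Require Import Defs.
From HB Require Import structures.
From mathcomp Require Import all_boot all_order all_algebra.
From mathcomp Require Import ring lra.
Import Order.TTheory GRing.Theory Num.Theory.
Local Open Scope ring_scope.

Section H.
Context {R : rcfType} {n p : nat} {X : 'M[R]_(n, p)}.

Lemma ipnC (a b : 'cV[R]_n) : ipn a b = ipn b a.
Proof. by rewrite /ipn; congr (_ * _); apply: eq_bigr => i _; rewrite mulrC. Qed.

Lemma ipnDl (a b c : 'cV[R]_n) : ipn (a + b) c = ipn a c + ipn b c.
Proof. by rewrite /ipn -mulrDr -big_split; congr (_ * _); apply: eq_bigr => i _; rewrite mxE mulrDl. Qed.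

Lemma ipnNl (a c : 'cV[R]_n) : ipn (- a) c = - ipn a c.
Proof. by rewrite /ipn -mulrN -sumrN; congr (_ * _); apply: eq_bigr => i _; rewrite mxE mulNr. Qed.

Lemma ipnBl (a b c : 'cV[R]_n) : ipn (a - b) c = ipn a c - ipn b c.
Proof. by rewrite ipnDl ipnNl. Qed.

Lemma ipnBr (a b c : 'cV[R]_n) : ipn c (a - b) = ipn c a - ipn c b.
Proof. by rewrite ipnC ipnBl ipnC (ipnC b). Qed.

Lemma ipnDr (a b c : 'cV[R]_n) : ipn c (a + b) = ipn c a + ipn c b.
Proof. by rewrite ipnC ipnDl ipnC (ipnC b). Qed.

Lemma ipn_sumr (I : finType) (P : pred I) (a : 'cV[R]_n) (g : I -> 'cV[R]_n) :
  ipn a (\sum_(j | P j) g j) = \sum_(j | P j) ipn a (g j).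
Proof.
rewrite /ipn -mulr_sumr; congr (_ * _).
rewrite exchange_big /=; apply: eq_bigr => i _.
by rewrite summxE mulr_sumr.
Qed.

Lemma ipnZr (a b : 'cV[R]_n) (k : R) : ipn a (k *: b) = k * ipn a b.
Proof.
rewrite /ipn mulrCA; congr (_ * _); rewrite mulr_sumr; apply: eq_bigr => i _.
by rewrite mxE mulrCA.
Qed.

Lemma sqn_ge0 (a : 'cV[R]_n) : 0 <= sqn a.
Proof.
rewrite /sqn /ipn mulr_ge0 // ?invr_ge0 ?ler0n //.
by apply: sumr_ge0 => i _; rewrite -expr2 sqr_ge0.
Qed.

Lemma sqnD (a b : 'cV[R]_n) : sqn (a + b) = sqn a + sqn b + 2 * ipn a b.
Proof. rewrite /sqn ipnDl !ipnDr (ipnC b a); ring. Qed.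

Lemma sqnB (a b : 'cV[R]_n) : sqn (a - b) = sqn a + sqn b - 2 * ipn a b.
Proof. rewrite /sqn ipnBl !ipnBr (ipnC b a); ring. Qed.

Lemma proj_orth {J : {set 'I_p}} {v w s} : is_proj X J v w -> in_span X J s -> ipn (v - w) s = 0.
Proof.
move=> [_ Ho] [c ->]; rewrite ipn_sumr big1 // => j jJ.
by rewrite ipnZr Ho // mulr0.
Qed.

Lemma in_spanB {J : {set 'I_p}} {w1 w2} : in_span X J w1 -> in_span X J w2 -> in_span X J (w1 - w2).
Proof.
move=> [c1 ->] [c2 ->]; exists (fun j => c1 j - c2 j).
by rewrite -sumrB; apply: eq_bigr => j _; rewrite scalerBl.
Qed.

Lemma in_span_sub {J J' : {set 'I_p}} {w} : J \subset J' -> in_span X J w -> in_span X J' w.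
Proof.
move=> sJ [c ->]; exists (fun j => if j \in J then c j else 0).
rewrite big_mkcond [RHS]big_mkcond /=; apply: eq_bigr => j _.
case: ifP => jJ; first by rewrite (subsetP sJ j jJ).
by case: ifP => _ //; rewrite scale0r.
Qed.

Lemma Jsel_sub (jsel : nat -> 'I_p) {k l} : (k <= l)%N -> Jsel jsel k \subset Jsel jsel l.
Proof.
move=> kl; apply/subsetP => x /imsetP [i _ ->].
apply/imsetP; exists (Ordinal (leq_trans (ltn_ord i) kl)) => //.
Qed.

End H.

Theorem lemma2p2 (R : rcfType) (n p : nat) (X : 'M[R]_(n, p))
  (fstar eps : 'cV[R]_n) (jsel : nat -> 'I_p) (F : nat -> 'cV[R]_n)
  (Pf : nat -> 'cV[R]_n) (kappa : R) (tau : nat) :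
  \rank X = n ->
  omp_path X (fstar + eps) jsel F ->
  (* Pf m = \hat\Pi_m f^* *)
  (forall m, is_proj X (Jsel jsel m) fstar (Pf m)) ->
  0 < kappa ->
  (* tau = inf { m >= 0 : r_m^2 <= kappa } *)
  sqn (fstar + eps - F tau) <= kappa ->
  (forall m, (m < tau)%N -> kappa < sqn (fstar + eps - F m)) ->
  forall m : nat,
    sqn (F tau - F m)
      <= sqn (F m - fstar)
         + 2 * `| ipn (fstar - Pf m) eps |
         + (kappa - sqn eps) * (tau < m)%N%:R
         + (sqn eps
            + (sqn (fstar + eps - F tau.-1) - sqn (fstar + eps - F tau))
            - kappa) * (m < tau)%N%:R.
Proof.
move=> _ [HF _] HPf kpos Htau Hlt m.
set Y := fstar + eps.
have {}Htau : sqn (Y - F tau) <= kappa by [].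
have {}Hlt : forall k, (k < tau)%N -> kappa < sqn (Y - F k) by [].
have nest : forall k l, (k <= l)%N -> sqn (F l - F k) = sqn (Y - F k) - sqn (Y - F l).
  move=> k l kl.
  have -> : Y - F k = (Y - F l) + (F l - F k).
    by rewrite /Y; apply/matrixP => i j; rewrite !mxE; ring.
  have H0 : ipn (Y - F l) (F l - F k) = 0.
    apply: (proj_orth (HF l)); apply: in_spanB; first by case: (HF l).
    by apply: in_span_sub (Jsel_sub jsel kl) _; case: (HF k).
  by rewrite (sqnD (Y - F l)) H0 mulr0 addr0 addrAC subrr add0r.
set a := fstar - Pf m. set b := F m - Pf m.
have spb : in_span X (Jsel jsel m) b by apply: in_spanB; [case: (HF m)|case: (HPf m)].
have ab : ipn a b = 0 by apply: (proj_orth (HPf m)).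
have rb : ipn (Y - F m) b = 0 by apply: (proj_orth (HF m)).
have H1 : sqn (F m - fstar) = sqn a + sqn b.
  have -> : F m - fstar = b - a by rewrite /a /b; apply/matrixP => i j; rewrite !mxE; ring.
  by rewrite sqnB ipnC ab mulr0 subr0 addrC.
have H2 : sqn (Y - F m) = sqn a + sqn eps - sqn b + 2 * ipn a eps.
  have -> : Y - F m = a + (eps - b) by rewrite /Y /a /b; apply/matrixP => i j; rewrite !mxE; ring.
  have eb : ipn (eps - b) b = 0.
    have -> : eps - b = (Y - F m) - a by rewrite /Y /a /b; apply/matrixP => i j; rewrite !mxE; ring.
    by rewrite ipnBl rb ab subr0.
  rewrite sqnD ipnBr ab subr0 sqnB.
  have : ipn eps b = sqn b by move: eb; rewrite ipnBl /sqn => /eqP; rewrite subr_eq0 => /eqP.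
  move=> ->; ring.
have hA := sqn_ge0 a. have hB := sqn_ge0 b.
have hC1 := ler_norm (ipn a eps).
have hC2 : - ipn a eps <= `|ipn a eps| by rewrite -normrN ler_norm.
rewrite -/Y -/a H1.
have hT : true%:R = 1 :> R by [].
have hF : false%:R = 0 :> R by [].
case: (ltngtP tau m) => h; rewrite ?hT ?hF.
-   have -> : F tau - F m = - (F m - F tau) by rewrite opprB.
  have -> : sqn (- (F m - F tau)) = sqn (F m - F tau) by rewrite /sqn ipnNl ipnC ipnNl opprK.
  rewrite (nest tau m (ltnW h)) H2.
  move: hA hB hC1 hC2 Htau.
  generalize (sqn a) (sqn b) (sqn eps) (ipn a eps) (sqn (Y - F tau)) (sqn (Y - F tau.-1)).
  move=> A B E C r1 r2; clear => h1 h2 h3 h4 h5. lra.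
- rewrite (nest m tau (ltnW h)) H2.
  have hk : kappa < sqn (Y - F tau.-1) by apply: Hlt; rewrite prednK // (leq_ltn_trans _ h).
  move: hA hB hC1 hC2 Htau hk.
  generalize (sqn a) (sqn b) (sqn eps) (ipn a eps) (sqn (Y - F tau)) (sqn (Y - F tau.-1)).
  move=> A B E C r1 r2; clear => h1 h2 h3 h4 h5 h6. lra.
- have -> : F tau - F m = 0 by rewrite h subrr.
  have -> : sqn (0 : 'cV[R]_n) = 0 by rewrite /sqn /ipn big1 ?mulr0 // => i _; rewrite mxE mul0r.
  move: hA hB (normr_ge0 (ipn a eps)).
  generalize (sqn a) (sqn b) (sqn eps) (ipn a eps) (sqn (Y - F tau)) (sqn (Y - F tau.-1)).
  move=> A B E C r1 r2; clear => h1 h2 h3. lra.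
Qed.
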